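(* Let $V,W$ be real inner product spaces of dimension $2$ and $3$ respectively. For $\epsilon\ge0$ and $L\in\mathrm{Hom}(V,W)$ set $q_\epsilon(L)=\operatorname{tr}\sqrt{\epsilon^2\mathbb 1+L^*L}$. Then: (a) $q_\epsilon(L)=\sqrt{\operatorname{tr}(\epsilon^2\mathbb 1+L^*L)+2\sqrt{\det(\epsilon^2\mathbb 1+L^*L)}}$ for all $L$; consequently $q_\epsilon$ is smooth for $\epsilon>0$. (b) $q_\epsilon$ is convex for every $\epsilon\ge0$. (c) Let $L\in\mathrm{Hom}(V,W)$, let $A:W\to W$ be nonnegative self-adjoint and let $\epsilon\ge0$, assuming moreover that $L$ has rank $2$ if $\epsilon=0$. Then $\frac{d}{dt}q_\epsilon((\mathbb 1+tA)L)\big|_{t=0}\ge0$, with strict inequality if $A\circ L\neq0$.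
   Context: $L^*$ denotes the adjoint of $L$; $\mathbb 1$ is the identity of $V$. *)

(* Defs.v *)
From HB Require Import structures.
From mathcomp Require Import all_boot all_order all_algebra.
From mathcomp Require Import all_classical all_reals all_analysis.
Set Implicit Arguments. Unset Strict Implicit. Unset Printing Implicit Defensive.
Import Order.TTheory GRing.Theory Num.Theory.
Import numFieldNormedType.Exports.
Local Open Scope classical_set_scope.
Local Open Scope ring_scope.

(* V = R^2, W = R^3 with their standard inner products; L : Hom(V,W) is the
   3x2 matrix acting on column vectors, L^* = L^T. *)

Definition psdmx {R : realType} {n : nat} (M : 'M[R]_n) : Prop :=
  M^T = M /\ forall v : 'cV[R]_n, 0 <= (v^T *m M *m v) 0 0.

(* the (unique) nonnegative self-adjoint square root of M, when it exists *)
Definition sqrtmx {R : realType} {n : nat} (M : 'M[R]_n) : 'M[R]_n :=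
  xget 0 [set S : 'M[R]_n | psdmx S /\ S *m S = M].

Definition q_eps {R : realType} (eps : R) (L : 'M[R]_(3, 2)) : R :=
  \tr (sqrtmx (eps ^+ 2 *: 1%:M + L^T *m L)).

Fixpoint iter_dderiv {R : realType} {m n : nat} (vs : seq 'M[R]_(m, n))
  (f : 'M[R]_(m, n) -> R) : 'M[R]_(m, n) -> R :=
  match vs with
  | [::] => f
  | v :: vs' => fun x => 'D_v (iter_dderiv vs' f) x
  end.

Definition smooth {R : realType} {m n : nat} (f : 'M[R]_(m, n) -> R) : Prop :=
  forall vs : seq 'M[R]_(m, n),
    continuous (iter_dderiv vs f) /\
    forall (v x : 'M[R]_(m, n)), derivable (iter_dderiv vs f) x v.

Definition convex_fun {R : realType} {m n : nat} (f : 'M[R]_(m, n) -> R) : Prop :=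
  forall (x y : 'M[R]_(m, n)) (t : R), 0 <= t <= 1 ->
    f ((1 - t) *: x + t *: y) <= (1 - t) * f x + t * f y.

(* Main.v *)
Require Import Defs.
From HB Require Import structures.
From mathcomp Require Import all_boot all_order all_algebra.
From mathcomp Require Import all_classical all_reals all_analysis.
From mathcomp Require Import ring lra.
Import Order.TTheory GRing.Theory Num.Theory.
Import numFieldNormedType.Exports.
Local Open Scope ring_scope.


Lemma I2_0 : (0 : 'I_2) = ord0. Proof. exact/val_inj. Qed.
Lemma I2_1 : (1 : 'I_2) = lift ord0 ord0. Proof. exact/val_inj. Qed.

Section Two.
Context {R : realType}.
Implicit Types (A B : 'M[R]_2).

Lemma mul2E m p (A : 'M[R]_(m, 2)) (B : 'M[R]_(2, p)) i j :
  (A *m B) i j = A i 0 * B 0 j + A i 1 * B 1 j.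
Proof. by rewrite mxE !big_ord_recl big_ord0 addr0 I2_0 I2_1. Qed.

Lemma tr2E A : \tr A = A 0 0 + A 1 1.
Proof. by rewrite /mxtrace !big_ord_recl big_ord0 addr0 I2_0 I2_1. Qed.

Lemma det2E A : \det A = A 0 0 * A 1 1 - A 0 1 * A 1 0.
Proof.
rewrite (expand_det_row _ 0) !big_ord_recl big_ord0 addr0 /cofactor.
rewrite !det_mx11 /= !mxE /= I2_0 I2_1.
have -> : lift ord0 (0 : 'I_1) = lift ord0 ord0 :> 'I_2 by apply/val_inj.
have -> : lift (lift ord0 ord0) (0 : 'I_1) = ord0 :> 'I_2 by apply/val_inj.
rewrite /bump /=; ring.
Qed.

Lemma quad2E A (v : 'cV[R]_2) :
  (v^T *m A *m v) 0 0 = A 0 0 * v 0 0 ^+ 2 + (A 0 1 + A 1 0) * v 0 0 * v 1 0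
    + A 1 1 * v 1 0 ^+ 2.
Proof. rewrite (@mul2E 1 1) !(@mul2E 1 2) !mxE. ring. Qed.

End Two.


Section Two2.
Context {R : realType}.
Implicit Types (A B M S : 'M[R]_2).

Definition mk2 (a b c d : R) : 'M[R]_2 := \matrix_(i < 2, j < 2)
  (if i == 0 :> nat then (if j == 0 :> nat then a else b)
   else (if j == 0 :> nat then c else d)).

Lemma mk2E a b c d : [/\ mk2 a b c d 0 0 = a, mk2 a b c d 0 1 = b,
  mk2 a b c d 1 0 = c & mk2 a b c d 1 1 = d].
Proof. by rewrite !mxE. Qed.

Definition v2 (x y : R) : 'cV[R]_2 := \col_(i < 2) (if i == 0 :> nat then x else y).
Lemma v2E x y : v2 x y 0 0 = x /\ v2 x y 1 0 = y.
Proof. by rewrite !mxE. Qed.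

Lemma mx2P A B : A 0 0 = B 0 0 -> A 0 1 = B 0 1 -> A 1 0 = B 1 0 ->
  A 1 1 = B 1 1 -> A = B.
Proof.
move=> h00 h01 h10 h11; apply/matrixP => i j.
have Hi : i = 0 \/ i = 1.
  by case: i => [[|[|//]] Hi]; [left|right]; apply/val_inj.
have Hj : j = 0 \/ j = 1.
  by case: j => [[|[|//]] Hj]; [left|right]; apply/val_inj.
by case: Hi => ->; case: Hj => ->.
Qed.

Lemma quad_psd (a b d : R) :
  (forall x y, 0 <= a * x ^+ 2 + 2 * b * x * y + d * y ^+ 2) ->
  [/\ 0 <= a, 0 <= d & b ^+ 2 <= a * d].
Proof.
move=> H.
have ha : 0 <= a by have := H 1 0; rewrite expr1n expr0n /=; lra.
have hd : 0 <= d by have := H 0 1; rewrite expr1n expr0n /=; lra.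
split => //.
have [a0|apos] := eqVneq a 0.
  have := H (- (d + 1)) b; rewrite a0 => h.
  nra.
have apos' : 0 < a by rewrite lt_def apos ha.
have := H (- b) a => h.
nra.
Qed.

Lemma psd2P M : psdmx M <->
  [/\ M 0 1 = M 1 0, 0 <= M 0 0, 0 <= M 1 1 & M 0 1 ^+ 2 <= M 0 0 * M 1 1].
Proof.
split.
  move=> [hT hq].
  have hs : M 0 1 = M 1 0 by rewrite -{1}hT mxE.
  have := @quad_psd (M 0 0) (M 0 1) (M 1 1).
  case.
    move=> x y; have := hq (v2 x y); rewrite quad2E; case: (v2E x y) => -> ->.
    by rewrite -hs; lra.
  by [].
move=> [hs ha hd hb]; split.
  by apply: mx2P; rewrite !mxE.
move=> v; rewrite quad2E -hs.
set x := v 0 0; set y := v 1 0.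
have [a0|apos] := eqVneq (M 0 0) 0.
  have b0 : M 0 1 = 0 by move: hb; rewrite a0 mul0r; nra.
  rewrite b0; nra.
have apos' : 0 < M 0 0 by rewrite lt_def apos ha.
rewrite -(pmulr_rge0 _ apos').
have h1 : 0 <= (M 0 0 * x + M 0 1 * y) ^+ 2 by apply: sqr_ge0.
have h2 : 0 <= (M 0 0 * M 1 1 - M 0 1 ^+ 2) * y ^+ 2.
  by apply: mulr_ge0; [lra| apply: sqr_ge0].
have -> : M 0 0 * (M 0 0 * x ^+ 2 + (M 0 1 + M 0 1) * x * y + M 1 1 * y ^+ 2)
  = (M 0 0 * x + M 0 1 * y) ^+ 2 + (M 0 0 * M 1 1 - M 0 1 ^+ 2) * y ^+ 2 by ring.
lra.
Qed.

End Two2.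


Section Sqrt2.
Context {R : realType}.
Implicit Types (A B M S : 'M[R]_2).

Definition qf M := Num.sqrt (\tr M + 2 * Num.sqrt (\det M)).

Lemma tr_sqrt2 M S : psdmx S -> S *m S = M -> \tr S = qf M.
Proof.
move=> /psd2P [hs ha hd hb] <-.
rewrite /qf !tr2E det2E !mul2E -!hs.
set s := S 0 0; set t := S 0 1; set u := S 1 1.
have -> : (s * s + t * t) * (t * t + u * u) - (s * t + t * u) * (t * s + u * t)
  = (s * u - t ^+ 2) ^+ 2 by ring.
rewrite sqrtr_sqr ger0_norm; last by rewrite subr_ge0.
have -> : s * s + t * t + (t * t + u * u) + 2 * (s * u - t ^+ 2) = (s + u) ^+ 2
  by ring.
by rewrite sqrtr_sqr ger0_norm //; apply: addr_ge0.
Qed.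

Lemma sqrt2_ex M : psdmx M -> exists S, psdmx S /\ S *m S = M.
Proof.
move=> /[dup] hM /psd2P [hs ha hd hb].
set a := M 0 0 in ha hb *; set b := M 0 1 in hs hb *; set d := M 1 1 in hd hb *.
have hdet : 0 <= a * d - b ^+ 2 by lra.
set dd := Num.sqrt (a * d - b ^+ 2).
have hdd : 0 <= dd by apply: sqrtr_ge0.
have hdd2 : dd ^+ 2 = a * d - b ^+ 2 by rewrite sqr_sqrtr.
have htt0 : 0 <= a + d + 2 * dd by lra.
set tt := Num.sqrt (a + d + 2 * dd).
have htt2 : tt ^+ 2 = a + d + 2 * dd by rewrite sqr_sqrtr.
have [tt0|ttn0] := eqVneq tt 0.
  have e : a + d + 2 * dd = 0 by rewrite -htt2 tt0 expr0n.
  have a0 : a = 0 by lra.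
  have d0 : d = 0 by lra.
  have b0 : b = 0 by move: hb; rewrite a0 mul0r; nra.
  exists 0; split.
    by apply/psd2P; rewrite !mxE; split => //; rewrite expr0n /= mulr0.
  rewrite mul0mx; apply: mx2P; rewrite !mxE //.
  by rewrite -hs b0.
have ttp : 0 < tt by rewrite lt_def ttn0 sqrtr_ge0.
exists (mk2 (tt^-1 * (a + dd)) (tt^-1 * b) (tt^-1 * b) (tt^-1 * (d + dd))).
case: (mk2E (tt^-1 * (a + dd)) (tt^-1 * b) (tt^-1 * b) (tt^-1 * (d + dd)))
  => e00 e01 e10 e11.
have ti : 0 < tt^-1 by rewrite invr_gt0.
split.
  apply/psd2P; rewrite e00 e01 e10 e11; split => //.
  - by apply: mulr_ge0; lra.
  - by apply: mulr_ge0; lra.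
  have -> : tt^-1 * (a + dd) * (tt^-1 * (d + dd)) = tt^-1 ^+ 2 * ((a + dd) * (d + dd))
    by ring.
  rewrite exprMn ler_wpM2l //; first exact: sqr_ge0.
  nra.
have k : tt^-1 * tt^-1 * tt ^+ 2 = 1 by field.
apply: mx2P; rewrite !mul2E ?e00 ?e01 ?e10 ?e11 -?hs.
- have -> : tt^-1 * (a + dd) * (tt^-1 * (a + dd)) + tt^-1 * b * (tt^-1 * b)
    = tt^-1 * tt^-1 * tt ^+ 2 * a.
    rewrite htt2; apply/eqP; rewrite -subr_eq0; apply/eqP.
    have -> : forall z : R, z * (a + dd) * (z * (a + dd)) + z * b * (z * b) -
      z * z * (a + d + 2 * dd) * a = z * z * (dd ^+ 2 - (a * d - b ^+ 2)) by move=> z; ring.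
    by rewrite hdd2 subrr mulr0.
  by rewrite k mul1r.
- have -> : tt^-1 * (a + dd) * (tt^-1 * b) + tt^-1 * b * (tt^-1 * (d + dd))
    = tt^-1 * tt^-1 * tt ^+ 2 * b by rewrite htt2; ring.
  by rewrite k mul1r.
- have -> : tt^-1 * b * (tt^-1 * (a + dd)) + tt^-1 * (d + dd) * (tt^-1 * b)
    = tt^-1 * tt^-1 * tt ^+ 2 * b by rewrite htt2; ring.
  by rewrite k mul1r.
- have -> : tt^-1 * b * (tt^-1 * b) + tt^-1 * (d + dd) * (tt^-1 * (d + dd))
    = tt^-1 * tt^-1 * tt ^+ 2 * d.
    rewrite htt2; apply/eqP; rewrite -subr_eq0; apply/eqP.
    have -> : forall z : R, z * b * (z * b) + z * (d + dd) * (z * (d + dd)) -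
      z * z * (a + d + 2 * dd) * d = z * z * (dd ^+ 2 - (a * d - b ^+ 2)) by move=> z; ring.
    by rewrite hdd2 subrr mulr0.
  by rewrite k mul1r.
Qed.

Lemma tr_sqrtmx M : psdmx M -> \tr (sqrtmx M) = qf M.
Proof.
move=> hM; have [S [hS hSS]] := @sqrt2_ex M hM.
have [] := @xgetPex _ 0 [set S : 'M[R]_2 | psdmx S /\ S *m S = M]%classic
  (ex_intro _ S (conj hS hSS)).
exact: tr_sqrt2.
Qed.

End Sqrt2.


Section Dot.
Context {R : realType}.

Definition dot {n} (u w : 'cV[R]_n) : R := (u^T *m w) 0 0.

Lemma dotE {n} (u w : 'cV[R]_n) : dot u w = \sum_i u i 0 * w i 0.
Proof. by rewrite /dot mxE; apply: eq_bigr => i _; rewrite mxE. Qed.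

Lemma dotC {n} (u w : 'cV[R]_n) : dot u w = dot w u.
Proof. by rewrite !dotE; apply: eq_bigr => i _; rewrite mulrC. Qed.

Lemma dotDr {n} (u w z : 'cV[R]_n) : dot u (w + z) = dot u w + dot u z.
Proof. by rewrite /dot mulmxDr mxE. Qed.

Lemma dotDl {n} (u w z : 'cV[R]_n) : dot (w + z) u = dot w u + dot z u.
Proof. by rewrite dotC dotDr !(dotC u). Qed.

Lemma dotZr {n} (u w : 'cV[R]_n) a : dot u (a *: w) = a * dot u w.
Proof. by rewrite /dot -scalemxAr mxE. Qed.

Lemma dotZl {n} (u w : 'cV[R]_n) a : dot (a *: w) u = a * dot w u.
Proof. by rewrite dotC dotZr dotC. Qed.

Lemma dotNr {n} (u w : 'cV[R]_n) : dot u (- w) = - dot u w.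
Proof. by rewrite -scaleN1r dotZr mulN1r. Qed.

Lemma dotNl {n} (u w : 'cV[R]_n) : dot (- w) u = - dot w u.
Proof. by rewrite dotC dotNr dotC. Qed.

Lemma dotBr {n} (u w z : 'cV[R]_n) : dot u (w - z) = dot u w - dot u z.
Proof. by rewrite dotDr dotNr. Qed.

Lemma dotBl {n} (u w z : 'cV[R]_n) : dot (w - z) u = dot w u - dot z u.
Proof. by rewrite dotDl dotNl. Qed.

Lemma dot_mul {m n} (u : 'cV[R]_m) (A : 'M[R]_(m, n)) w :
  dot u (A *m w) = dot (A^T *m u) w.
Proof. by rewrite /dot trmx_mul trmxK mulmxA. Qed.

Lemma quad_dot {n} (A : 'M[R]_n) v : (v^T *m A *m v) 0 0 = dot v (A *m v).
Proof. by rewrite /dot mulmxA. Qed.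

Lemma dot_ge0 {n} (u : 'cV[R]_n) : 0 <= dot u u.
Proof. by rewrite dotE; apply: sumr_ge0 => i _; rewrite -expr2 sqr_ge0. Qed.

Lemma dot_eq0 {n} (u : 'cV[R]_n) : dot u u = 0 -> u = 0.
Proof.
rewrite dotE => h; apply/matrixP => i j; rewrite (ord1 j) mxE.
have := h; move/eqP; rewrite psumr_eq0; last by move=> k _; rewrite -expr2 sqr_ge0.
move/allP => /(_ i (mem_index_enum i)) /=.
by rewrite mulf_eq0 orbb => /eqP.
Qed.

Lemma dot1 {n} (u : 'cV[R]_n) : dot u (1%:M *m u) = dot u u.
Proof. by rewrite mul1mx. Qed.

Lemma trZ {m n} (a : R) (A : 'M[R]_(m, n)) : (a *: A)^T = a *: A^T.
Proof. by apply/matrixP => i j; rewrite !mxE. Qed.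

End Dot.

Section PartA.
Context {R : realType}.

Definition Mof (eps : R) (L : 'M[R]_(3, 2)) : 'M[R]_2 := eps ^+ 2 *: 1%:M + L^T *m L.

Lemma Mof_quad eps L v : dot v (Mof eps L *m v) = eps ^+ 2 * dot v v + dot (L *m v) (L *m v).
Proof.
by rewrite /Mof mulmxDl dotDr -scalemxAl mul1mx dotZr -mulmxA dot_mul trmxK.
Qed.

Lemma Mof_sym eps L : (Mof eps L)^T = Mof eps L.
Proof. by rewrite /Mof linearD /= trmx_mul trmxK linearZ /= trmx1. Qed.

Lemma Mof_psd eps L : psdmx (Mof eps L).
Proof.
split; first exact: Mof_sym.
move=> v; rewrite quad_dot Mof_quad.
apply: addr_ge0; last exact: dot_ge0.
apply: mulr_ge0; [exact: sqr_ge0 | exact: dot_ge0].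
Qed.

Lemma q_epsE eps L : q_eps eps L = qf (Mof eps L).
Proof. by rewrite /q_eps tr_sqrtmx //; apply: Mof_psd. Qed.

End PartA.


Section Convex.
Context {R : realType}.
Implicit Types (X Y C : 'M[R]_2).

Lemma sqrt_le (x y : R) : 0 <= y -> x <= y ^+ 2 -> Num.sqrt x <= y.
Proof.
move=> y0 hxy; rewrite -(ger0_norm y0) -sqrtr_sqr ler_sqrt //; exact: sqr_ge0.
Qed.

Lemma le_sqrt (x y : R) : 0 <= y -> x ^+ 2 <= y -> x <= Num.sqrt y.
Proof.
move=> y0 h; have [hneg|hpos] := ltP x 0.
  by apply: le_trans (ltW hneg) (sqrtr_ge0 _).
by rewrite -(ger0_norm hpos) -sqrtr_sqr ler_sqrt.
Qed.

Lemma tr_le_qf C : \tr C <= qf (C^T *m C).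
Proof.
rewrite /qf !tr2E det2E !mul2E !mxE.
set p := C 0 0; set q := C 0 1; set r := C 1 0; set s := C 1 1.
have -> : (p * p + r * r) * (q * q + s * s) - (p * q + r * s) * (q * p + s * r)
  = (p * s - q * r) ^+ 2 by ring.
rewrite sqrtr_sqr.
have hn : p * s - q * r <= `|p * s - q * r| by apply: ler_norm.
apply: le_sqrt.
  have := sqr_ge0 (q - r); have := normr_ge0 (p * s - q * r); nra.
have := sqr_ge0 (q - r); nra.
Qed.

Lemma qf_mono X Y : psdmx X -> psdmx Y -> psdmx (Y - X) -> qf X <= qf Y.
Proof.
move=> /psd2P [xs x0 x1 xb] /psd2P [ys y0 y1 yb] /psd2P [].
rewrite !mxE => ds d0 d1 db.
rewrite /qf !tr2E !det2E -xs -ys.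
set a := X 0 0 in x0 xb d0 db *; set b := X 0 1 in xs xb ds db *;
set d := X 1 1 in x1 xb d1 db *.
set a' := Y 0 0 in y0 yb d0 db *; set b' := Y 0 1 in ys yb ds db *;
set d' := Y 1 1 in y1 yb d1 db *.
have hP : 0 <= a * (d' - d) + d * (a' - a) by apply: addr_ge0; apply: mulr_ge0.
have h1 : 4 * (a * d * ((a' - a) * (d' - d))) <= (a * (d' - d) + d * (a' - a)) ^+ 2.
  have := sqr_ge0 (a * (d' - d) - d * (a' - a)); nra.
have h2 : (b * (b' - b)) ^+ 2 <= a * d * ((a' - a) * (d' - d)).
  rewrite exprMn; apply: ler_pM; [exact: sqr_ge0| exact: sqr_ge0| exact: xb | exact: db].
have h3 : 2 * (b * (b' - b)) <= a * (d' - d) + d * (a' - a).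
  have : (2 * (b * (b' - b))) ^+ 2 <= (a * (d' - d) + d * (a' - a)) ^+ 2.
    rewrite exprMn; lra.
  move=> h; nra.
have hdet : a * d - b * b <= a' * d' - b' * b'.
  have -> : a' * d' - b' * b' = (a * d - b * b) + (a * (d' - d) + d * (a' - a)
    - 2 * (b * (b' - b))) + ((a' - a) * (d' - d) - (b' - b) ^+ 2) by ring.
  lra.
have hx : 0 <= a * d - b * b by rewrite -expr2; lra.
rewrite ler_sqrt; last first.
  apply: addr_ge0; [lra | apply: mulr_ge0 => //; exact: sqrtr_ge0].
have : Num.sqrt (a * d - b * b) <= Num.sqrt (a' * d' - b' * b').
  by rewrite ler_sqrt //; lra.
lra.
Qed.


Lemma res_expand m k (a : 'cV[R]_m) (U : 'M[R]_(m, k)) (c : 'cV[R]_k) :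
  dot (a - U *m c) (a - U *m c) =
  dot a a - 2 * dot (U^T *m a) c + dot c (U^T *m U *m c).
Proof.
rewrite dotBl !dotBr (dotC (U *m c) a) dot_mul.
rewrite [dot (U *m c) (U *m c)]dot_mul -mulmxA (dotC _ c).
by rewrite (dotC (U^T *m (U *m c)) c); ring.
Qed.

Lemma dominate (eps : R) (L : 'M[R]_(3, 2)) (U : 'M[R]_(3, 2)) (V : 'M[R]_2) :
  psdmx (1%:M - (U^T *m U + V^T *m V)) ->
  psdmx (Mof eps L - (U^T *m L + eps *: V^T)^T *m (U^T *m L + eps *: V^T)).
Proof.
set C := U^T *m L + eps *: V^T.
move=> [_ hG]; split.
  by rewrite linearB /= Mof_sym trmx_mul; congr (_ - _ *m _); apply: trmxK.
move=> v; rewrite quad_dot mulmxBl dotBr Mof_quad.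
have -> : dot v (C^T *m C *m v) = dot (C *m v) (C *m v).
  by rewrite -mulmxA dot_mul trmxK.
set a := L *m v; set b := eps *: v; set c := C *m v.
have hc : c = U^T *m a + V^T *m b.
  by rewrite /c /C mulmxDl -mulmxA /b -scalemxAl scalemxAr.
have h1 := hG c; rewrite quad_dot mulmxBl mul1mx dotBr mulmxDl dotDr in h1.
have h2 := dot_ge0 (a - U *m c); rewrite res_expand in h2.
have h3 := dot_ge0 (b - V *m c); rewrite res_expand in h3.
have h4 : dot (U^T *m a) c + dot (V^T *m b) c = dot c c by rewrite -dotDl -hc.
have h5 : dot b b = eps ^+ 2 * dot v v by rewrite /b dotZl dotZr mulrA expr2.
lra.
Qed.

Lemma dual_bound (eps : R) (L U : 'M[R]_(3, 2)) (V : 'M[R]_2) :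
  psdmx (1%:M - (U^T *m U + V^T *m V)) ->
  \tr (U^T *m L) + eps * \tr V <= qf (Mof eps L).
Proof.
move=> hG.
have -> : \tr (U^T *m L) + eps * \tr V = \tr (U^T *m L + eps *: V^T)
  by rewrite mxtraceD mxtraceZ mxtrace_tr.
apply: le_trans (tr_le_qf _) _.
apply: qf_mono; last exact: dominate; last exact: Mof_psd.
split; first by rewrite trmx_mul trmxK.
by move=> v; rewrite quad_dot -mulmxA dot_mul trmxK; apply: dot_ge0.
Qed.

End Convex.


Section Convex2.
Context {R : realType}.

Lemma P_psd (L : 'M[R]_(3, 2)) : psdmx (L^T *m L).
Proof.
split; first by rewrite trmx_mul trmxK.
by move=> v; rewrite quad_dot -mulmxA dot_mul trmxK; apply: dot_ge0.
Qed.

Lemma Mof_entries (eps : R) L :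
  [/\ Mof eps L 0 0 = eps ^+ 2 + (L^T *m L) 0 0, Mof eps L 0 1 = (L^T *m L) 0 1,
      Mof eps L 1 0 = (L^T *m L) 1 0 & Mof eps L 1 1 = eps ^+ 2 + (L^T *m L) 1 1].
Proof. by rewrite !mxE I2_0 I2_1 /= ?mulr1 ?mulr0 ?add0r. Qed.


Lemma exists_dual (eps : R) (L : 'M[R]_(3, 2)) : 0 < eps ->
  exists U V, psdmx (1%:M - (U^T *m U + V^T *m V)) /\
    \tr (U^T *m L) + eps * \tr V = qf (Mof eps L).
Proof.
move=> he.
set M := Mof eps L.
have [S [hS hSS]] := @sqrt2_ex _ M (Mof_psd eps L).
have hdetM : 0 < \det M.
  rewrite det2E; case: (Mof_entries eps L) => -> -> -> ->.
  case/psd2P: (P_psd L) => hs ha hd hb; rewrite -hs.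
  set a := (L^T *m L) 0 0 in ha hb *; set b := (L^T *m L) 0 1 in hb *;
  set d := (L^T *m L) 1 1 in hd hb *.
  have e2 : 0 < eps ^+ 2 by apply: exprn_gt0.
  have e4 : 0 < eps ^+ 2 * eps ^+ 2 by apply: mulr_gt0.
  have -> : (eps ^+ 2 + a) * (eps ^+ 2 + d) - b * b =
    eps ^+ 2 * eps ^+ 2 + eps ^+ 2 * (a + d) + (a * d - b ^+ 2) by ring.
  have : 0 <= eps ^+ 2 * (a + d) by apply: mulr_ge0; lra.
  lra.
have hSu : S \in unitmx.
  rewrite unitmxE unitfE; apply/eqP => h0; move: hdetM.
  by rewrite -hSS det_mulmx h0 mul0r ltxx.
set Si := invmx S.
have hST : S^T = S by case: hS.
have hSiT : Si^T = Si by rewrite /Si trmx_inv hST.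
have hSiS : Si *m S = 1%:M := mulVmx hSu.
have hSSi : S *m Si = 1%:M := mulmxV hSu.
exists (L *m Si), (eps *: Si); split.
  have -> : (L *m Si)^T *m (L *m Si) + (eps *: Si)^T *m (eps *: Si) = 1%:M.
    rewrite trmx_mul hSiT trZ hSiT -scalemxAl -scalemxAr scalerA -expr2.
    transitivity (Si *m M *m Si).
      rewrite /M /Mof mulmxDr mulmxDl -scalemxAr mulmx1 -scalemxAl !mulmxA addrC.
      done.
    by rewrite -hSS mulmxA hSiS mul1mx hSSi.
  rewrite subrr; split; first by rewrite linear0.
  by move=> v; rewrite mulmx0 mul0mx mxE.
rewrite -(tr_sqrt2 _ _ hS hSS).
rewrite trmx_mul hSiT mxtraceZ mulrA -expr2.
have -> : \tr S = \tr (Si *m M) by rewrite -hSS mulmxA hSiS mul1mx.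
by rewrite /M /Mof mulmxDr mxtraceD -scalemxAr mulmx1 mxtraceZ mulmxA addrC.
Qed.


Lemma convex_pos (eps : R) : 0 < eps -> convex_fun (q_eps eps).
Proof.
move=> he x y t /andP [t0 t1].
rewrite !q_epsE.
set z := (1 - t) *: x + t *: y.
have [U [V [hG hz]]] := exists_dual eps z he.
rewrite -hz.
have hx := @dual_bound _ eps x U V hG.
have hy := @dual_bound _ eps y U V hG.
have -> : \tr (U^T *m z) + eps * \tr V = (1 - t) * (\tr (U^T *m x) + eps * \tr V)
   + t * (\tr (U^T *m y) + eps * \tr V).
  by rewrite /z mulmxDr -!scalemxAr mxtraceD !mxtraceZ; ring.
have t0' : 0 <= 1 - t by lra.
have := ler_wpM2l t0' hx; have := ler_wpM2l t0 hy.
lra.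
Qed.

Lemma qf_bounds (e : R) L : 0 <= e ->
  qf (Mof 0 L) <= qf (Mof e L) /\ qf (Mof e L) <= qf (Mof 0 L) + 2 * e.
Proof.
move=> he.
rewrite /qf !tr2E !det2E; case: (Mof_entries e L) => -> -> -> ->.
case: (Mof_entries 0 L) => -> -> -> ->.
rewrite expr0n /= !add0r.
case/psd2P: (P_psd L) => hs ha hd hb; rewrite -hs.
set a := (L^T *m L) 0 0 in ha hb *; set b := (L^T *m L) 0 1 in hb *;
set d := (L^T *m L) 1 1 in hd hb *.
have hD0 : 0 <= a * d - b * b by rewrite -expr2; lra.
have e2 : 0 <= e ^+ 2 by apply: sqr_ge0.
have hDe : (e ^+ 2 + a) * (e ^+ 2 + d) - b * b =
  (a * d - b * b) + e ^+ 2 * (a + d) + e ^+ 2 * e ^+ 2 by ring.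
have hDe0 : a * d - b * b <= (e ^+ 2 + a) * (e ^+ 2 + d) - b * b.
  rewrite hDe; have := mulr_ge0 e2 (addr_ge0 ha hd); have := mulr_ge0 e2 e2; lra.
set s0 := Num.sqrt (a * d - b * b).
set s1 := Num.sqrt ((e ^+ 2 + a) * (e ^+ 2 + d) - b * b).
have s00 : 0 <= s0 by apply: sqrtr_ge0.
have s10 : 0 <= s1 by apply: sqrtr_ge0.
have s01 : s0 <= s1 by rewrite ler_sqrt //; lra.
have hQ0 : 0 <= a + d + 2 * s0 by lra.
split.
  by rewrite ler_sqrt; lra.
set Q0 := Num.sqrt (a + d + 2 * s0).
have Q00 : 0 <= Q0 by apply: sqrtr_ge0.
have Q02 : Q0 ^+ 2 = a + d + 2 * s0 by rewrite sqr_sqrtr.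
set sq := Num.sqrt (a + d).
have sq0 : 0 <= sq by apply: sqrtr_ge0.
have sq2 : sq ^+ 2 = a + d by rewrite sqr_sqrtr //; lra.
have sqQ : sq <= Q0 by rewrite ler_sqrt; lra.
have s02 : s0 ^+ 2 = a * d - b * b by rewrite sqr_sqrtr.
have hs1 : s1 <= s0 + e * sq + e ^+ 2.
  apply: sqrt_le; first by have := mulr_ge0 he sq0; lra.
  rewrite hDe.
  have -> : (s0 + e * sq + e ^+ 2) ^+ 2 = s0 ^+ 2 + e ^+ 2 * sq ^+ 2 + e ^+ 2 * e ^+ 2
    + 2 * (s0 * (e * sq)) + 2 * (s0 * e ^+ 2) + 2 * (e * sq * e ^+ 2) by ring.
  rewrite s02 sq2.
  have := mulr_ge0 s00 (mulr_ge0 he sq0); have := mulr_ge0 s00 e2;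
  have := mulr_ge0 (mulr_ge0 he sq0) e2; lra.
have esq : e * sq <= e * Q0 by apply: ler_wpM2l.
apply: sqrt_le; first lra.
have -> : (Q0 + 2 * e) ^+ 2 = Q0 ^+ 2 + 4 * (e * Q0) + 4 * e ^+ 2 by ring.
rewrite Q02.
have := mulr_ge0 he Q00; lra.
Qed.

Lemma convex_all (eps : R) : 0 <= eps -> convex_fun (q_eps eps).
Proof.
rewrite le_eqVlt => /orP [/eqP <- | hp]; last exact: convex_pos.
move=> x y t /andP [t0 t1].
apply/ler_addgt0Pr => e he.
have he2 : 0 < e / 2 by apply: divr_gt0.
have := @convex_pos (e / 2) he2 x y t; rewrite t0 t1 => /(_ isT).
rewrite !q_epsE.
have [z1 _] := @qf_bounds (e / 2) ((1 - t) *: x + t *: y) (ltW he2).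
have [_ x2] := @qf_bounds (e / 2) x (ltW he2).
have [_ y2] := @qf_bounds (e / 2) y (ltW he2).
have t0' : 0 <= 1 - t by lra.
have := ler_wpM2l t0' x2; have := ler_wpM2l t0 y2.
move=> h1 h2 h3.
have : (1 - t) * (qf (Mof 0 x) + 2 * (e / 2)) + t * (qf (Mof 0 y) + 2 * (e / 2))
  = (1 - t) * qf (Mof 0 x) + t * qf (Mof 0 y) + e by field.
lra.
Qed.

End Convex2.


Section Smooth.
Context {R : realType} {V : normedModType R}.

Inductive sm : (V -> R) -> Prop :=
| sm_base f : (forall x, differentiable f x) ->
    (forall v, exists c : R, forall x, 'D_v f x = c) -> sm f
| sm_add f g : sm f -> sm g -> sm (fun x => f x + g x)
| sm_mul f g : sm f -> sm g -> sm (fun x => f x * g x)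
| sm_sqrt f : sm f -> (forall x, 0 < f x) -> sm (fun x => Num.sqrt (f x))
| sm_inv f : sm f -> (forall x, f x != 0) -> sm (fun x => (f x)^-1).

Lemma sm_cst (c : R) : sm (fun _ => c).
Proof.
apply: sm_base => [x|v]; first exact: differentiable_cst.
by exists 0 => x; rewrite derive_cst.
Qed.

Lemma diff_sqrt (f : V -> R) x : differentiable f x -> 0 < f x ->
  differentiable (fun y => Num.sqrt (f y)) x.
Proof.
move=> df fp; apply: (differentiable_comp (g := Num.sqrt)) => //.
have [hd _] := is_derive1_sqrt fp; exact/derivable1_diffP.
Qed.

Lemma D_sqrt (f : V -> R) x v : differentiable f x -> 0 < f x ->
  'D_v (fun y => Num.sqrt (f y)) x = 'D_v f x * (2 * Num.sqrt (f x))^-1.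
Proof.
move=> df fp.
have ds : differentiable (@Num.sqrt R) (f x).
  by have [hd _] := is_derive1_sqrt fp; exact/derivable1_diffP.
rewrite deriveE; last exact: diff_sqrt.
rewrite (@diff_comp _ _ _ _ f (@Num.sqrt R)) //=.
rewrite deriv1E; last exact/derivable1_diffP.
by rewrite derive1E derive_sqrt // -deriveE.
Qed.

Lemma sm_diff f : sm f -> forall x, differentiable f x.
Proof.
elim => {f}.
- by move=> f df _.
- by move=> f g _ df _ dg x; exact: differentiableD (df x) (dg x).
- by move=> f g _ df _ dg x; exact: differentiableM (df x) (dg x).
- by move=> f _ df fp x; exact: diff_sqrt.
- by move=> f _ df fn x; exact: differentiableV.
Qed.

Lemma sm_D f : sm f -> forall v, sm (fun x => 'D_v f x).
Proof.
move=> hf; have dfall := sm_diff _ hf; move: dfall.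
elim: hf => {f}.
- move=> f df hc _ v; have [c hc'] := hc v.
  by rewrite (_ : (fun x => 'D_v f x) = fun _ => c); [exact: sm_cst | apply/funext].
- move=> f g hf IHf hg IHg _ v.
  have df := sm_diff _ hf; have dg := sm_diff _ hg.
  rewrite (_ : (fun x => 'D_v (fun x0 => f x0 + g x0) x) =
               fun x => 'D_v f x + 'D_v g x); last first.
    apply/funext => x; exact: (deriveD (@diff_derivable _ _ _ _ _ v (df x)) (@diff_derivable _ _ _ _ _ v (dg x))).
  by apply: sm_add; [exact: IHf | exact: IHg].
- move=> f g hf IHf hg IHg _ v.
  have df := sm_diff _ hf; have dg := sm_diff _ hg.
  rewrite (_ : (fun x => 'D_v (fun x0 => f x0 * g x0) x) =
               fun x => f x * 'D_v g x + g x * 'D_v f x); last first.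
    apply/funext => x; exact: (deriveM (@diff_derivable _ _ _ _ _ v (df x)) (@diff_derivable _ _ _ _ _ v (dg x))).
  by apply: sm_add; apply: sm_mul => //; [exact: IHg | exact: IHf].
- move=> f hf IHf fp _ v.
  have df := sm_diff _ hf.
  rewrite (_ : (fun x => 'D_v (fun x0 => Num.sqrt (f x0)) x) =
               fun x => 'D_v f x * (2 * Num.sqrt (f x))^-1); last first.
    by apply/funext => x; rewrite D_sqrt.
  apply: sm_mul; first exact: IHf.
  apply: sm_inv; first by apply: sm_mul; [exact: sm_cst | exact: sm_sqrt].
  by move=> x; rewrite mulf_neq0 // gt_eqF // sqrtr_gt0.
- move=> f hf IHf fn _ v.
  have df := sm_diff _ hf.
  rewrite (_ : (fun x => 'D_v (fun x0 => (f x0)^-1) x) =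
               fun x => (-1 * ((f x)^-1 * (f x)^-1)) * 'D_v f x); last first.
    apply/funext => x; rewrite deriveV //; last exact: diff_derivable.
    by rewrite -invfM -expr2 mulN1r.
  apply: sm_mul; last exact: IHf.
  by apply: sm_mul; [exact: sm_cst | apply: sm_mul; exact: sm_inv].
Qed.

End Smooth.


Section SmoothQ.
Context {R : realType}.

Lemma sm_smooth m n (f : 'M[R]_(m, n) -> R) : sm f -> smooth f.
Proof.
move=> hf vs.
have hs : sm (iter_dderiv vs f).
  elim: vs => [|v vs IH] //=.
  exact: (sm_D _ IH v).
split.
  by move=> x; apply: differentiable_continuous; apply: sm_diff _ hs x.
by move=> v x; apply: diff_derivable; apply: sm_diff _ hs x.
Qed.

Lemma derive_coord m n (M v : 'M[R]_(m, n)) i j :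
  'D_v (fun N : 'M[R]_(m, n) => N i j) M = v i j.
Proof.
have @f : {linear 'M[R]_(m, n) -> R}.
  by exists (fun N : 'M[R]_(_, _) => N i j); do 2![eexists]; do ?[constructor];
     rewrite ?mxE// => ? *; rewrite ?mxE//; move=> ?; rewrite !mxE.
rewrite (_ : (fun _ => _) = f) //.
rewrite deriveE; last exact/linear_differentiable/coord_continuous.
by rewrite diff_lin //; exact: coord_continuous.
Qed.

Lemma sm_coord m n i j : sm (fun N : 'M[R]_(m, n) => N i j).
Proof.
apply: sm_base => [x|v]; first exact: differentiable_coord.
by exists (v i j) => x; rewrite derive_coord.
Qed.

Lemma sm_sum {V : normedModType R} (I : Type) (r : seq I) (F : I -> V -> R) :
  (forall i, sm (F i)) -> sm (fun x => \sum_(i <- r) F i x).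
Proof.
move=> hF; elim: r => [|i r IH].
  by rewrite (_ : (fun x => _) = fun _ => 0); [exact: sm_cst | apply/funext => x; rewrite big_nil].
rewrite (_ : (fun x => _) = fun x => F i x + \sum_(j <- r) F j x).
  exact: sm_add.
by apply/funext => x; rewrite big_cons.
Qed.

Lemma sm_P i j : sm (fun L : 'M[R]_(3, 2) => (L^T *m L) i j).
Proof.
rewrite (_ : (fun L => _) = fun L : 'M[R]_(3, 2) => \sum_(k <- index_enum 'I_3) (L k i * L k j)).
  by apply: sm_sum => k; apply: sm_mul; apply: sm_coord.
by apply/funext => L; rewrite mxE; apply: eq_bigr => k _; rewrite mxE.
Qed.

Lemma detMof_pos (eps : R) L : 0 < eps -> 0 < \det (Mof eps L).
Proof.
move=> he.
rewrite det2E; case: (Mof_entries eps L) => -> -> -> ->.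
case/psd2P: (P_psd L) => hs ha hd hb; rewrite -hs.
set a := (L^T *m L) 0 0 in ha hb *; set b := (L^T *m L) 0 1 in hb *;
set d := (L^T *m L) 1 1 in hd hb *.
have e2 : 0 < eps ^+ 2 by apply: exprn_gt0.
have e4 : 0 < eps ^+ 2 * eps ^+ 2 by apply: mulr_gt0.
have -> : (eps ^+ 2 + a) * (eps ^+ 2 + d) - b * b =
  eps ^+ 2 * eps ^+ 2 + eps ^+ 2 * (a + d) + (a * d - b ^+ 2) by ring.
have : 0 <= eps ^+ 2 * (a + d) by apply: mulr_ge0; lra.
lra.
Qed.

Lemma smooth_q (eps : R) : 0 < eps -> smooth (q_eps eps).
Proof.
move=> he; apply: sm_smooth.
pose P i j := fun L : 'M[R]_(3, 2) => (L^T *m L) i j.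
pose T := fun L => (eps ^+ 2 + P 0 0 L) + (eps ^+ 2 + P 1 1 L).
pose D := fun L => (eps ^+ 2 + P 0 0 L) * (eps ^+ 2 + P 1 1 L) + (-1) * (P 0 1 L * P 1 0 L).
have hD : forall L, \det (Mof eps L) = D L.
  by move=> L; rewrite det2E; case: (Mof_entries eps L) => -> -> -> ->; rewrite /D mulN1r.
have hT : forall L, \tr (Mof eps L) = T L.
  by move=> L; rewrite tr2E; case: (Mof_entries eps L) => -> _ _ ->.
rewrite (_ : q_eps eps = fun L => Num.sqrt (T L + 2 * Num.sqrt (D L))); last first.
  by apply/funext => L; rewrite q_epsE /qf hT hD.
have smP : forall i j, sm (P i j) by move=> i j; exact: sm_P.
have Dpos : forall L, 0 < D L by move=> L; rewrite -hD; apply: detMof_pos.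
apply: sm_sqrt.
  apply: sm_add.
    by apply: sm_add; apply: sm_add => //; exact: sm_cst.
  apply: sm_mul; first exact: sm_cst.
  apply: sm_sqrt => //.
  apply: sm_add.
    by apply: sm_mul; apply: sm_add => //; exact: sm_cst.
  by apply: sm_mul; [exact: sm_cst | apply: sm_mul].
move=> L; rewrite -hT.
have e2 : 0 < eps ^+ 2 by apply: exprn_gt0.
have := sqrtr_ge0 (D L).
rewrite tr2E; case: (Mof_entries eps L) => -> _ _ ->.
case/psd2P: (P_psd L) => hs ha hd hb.
lra.
Qed.

End SmoothQ.


Section PartC.
Context {R : realType}.

Lemma DD {V : normedModType R} (f g : V -> R) x v :
  differentiable f x -> differentiable g x ->
  'D_v (fun y => f y + g y) x = 'D_v f x + 'D_v g x.
Proof.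
move=> df dg.
exact: (deriveD (@diff_derivable _ _ _ _ _ v df) (@diff_derivable _ _ _ _ _ v dg)).
Qed.

Lemma DM {V : normedModType R} (f g : V -> R) x v :
  differentiable f x -> differentiable g x ->
  'D_v (fun y => f y * g y) x = f x * 'D_v g x + g x * 'D_v f x.
Proof.
move=> df dg.
exact: (deriveM (@diff_derivable _ _ _ _ _ v df) (@diff_derivable _ _ _ _ _ v dg)).
Qed.

Lemma sm_id : sm (fun t : R => t).
Proof.
apply: sm_base => [x|v]; first by have [h _] := @is_diff_id R R x.
by exists v => x; rewrite derive_id.
Qed.

Definition p2 (a b c : R) : R -> R := fun t => a + b * t + c * (t * t).

Lemma sm_p2 a b c : sm (p2 a b c).
Proof.
by apply: sm_add; [apply: sm_add; [exact: sm_cst | apply: sm_mul; [exact: sm_cst | exact: sm_id]]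
  | apply: sm_mul; [exact: sm_cst | apply: sm_mul; exact: sm_id]].
Qed.

Lemma p2_diff a b c x : differentiable (p2 a b c) x.
Proof. exact: sm_diff (sm_p2 a b c) x. Qed.

Lemma p2_D a b c : 'D_1 (p2 a b c) 0 = b.
Proof.
have dc : forall k : R, differentiable (fun _ : R => k) 0 by move=> k; exact: differentiable_cst.
have di : differentiable (fun t : R => t) 0 by have [h _] := @is_diff_id R R 0.
rewrite /p2 DD; last by apply: differentiableM => //; apply: differentiableM.
  by rewrite DD // DM // DM // DM // !derive_cst derive_id; ring.
by apply: differentiableD => //; apply: differentiableM.
Qed.


Lemma Mof_line (eps : R) (L : 'M[R]_(3, 2)) (A : 'M[R]_3) t :
  Mof eps ((1%:M + t *: A) *m L) = Mof eps L
    + t *: (L^T *m (A *m L) + (A *m L)^T *m L) + (t * t) *: ((A *m L)^T *m (A *m L)).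
Proof.
rewrite /Mof mulmxDl mul1mx -scalemxAl.
set B := A *m L.
have -> : (L + t *: B)^T = L^T + t *: B^T by apply/matrixP => i j; rewrite !mxE.
rewrite mulmxDl !mulmxDr -!scalemxAl -!scalemxAr scalerA scalerDr.
by rewrite !addrA; congr (_ + _); rewrite -!addrA; congr (_ + (_ + _)); rewrite addrC.
Qed.


Lemma cross_psd (a b d a' b' d' : R) : 0 <= a -> 0 <= d -> b ^+ 2 <= a * d ->
  0 <= a' -> 0 <= d' -> b' ^+ 2 <= a' * d' -> 2 * (b * b') <= a * d' + d * a'.
Proof.
move=> ha hd hb ha' hd' hb'.
have hP : 0 <= a * d' + d * a' by apply: addr_ge0; apply: mulr_ge0.
have h1 : 4 * (a * d * (a' * d')) <= (a * d' + d * a') ^+ 2.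
  have := sqr_ge0 (a * d' - d * a'); nra.
have h2 : (b * b') ^+ 2 <= a * d * (a' * d').
  rewrite exprMn; apply: ler_pM; [exact: sqr_ge0| exact: sqr_ge0| exact: hb | exact: hb'].
have : (2 * (b * b')) ^+ 2 <= (a * d' + d * a') ^+ 2 by rewrite exprMn; lra.
move=> h; nra.
Qed.

Lemma psd_null n (A : 'M[R]_n) v : psdmx A -> dot v (A *m v) = 0 -> A *m v = 0.
Proof.
move=> [hT hq] h0; apply: dot_eq0.
set w := A *m v.
set al := dot w (A *m w); set be := dot w w.
have hal : 0 <= al by rewrite /al -quad_dot; apply: hq.
have hs : forall s : R, 0 <= 2 * s * be + s ^+ 2 * al.
  move=> s; have := hq (v + s *: w); rewrite quad_dot mulmxDr -scalemxAr.
  rewrite !dotDl !dotDr !dotZl !dotZr h0.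
  have -> : dot v (A *m w) = dot w (A *m v).
    by rewrite dot_mul hT dotC.
  rewrite -/w -/al -/be; lra.
have hbe : 0 <= be by apply: dot_ge0.
have [a0|ap] := eqVneq al 0.
  have := hs (- be); rewrite a0 mulr0 addr0; nra.
have alp : 0 < al by rewrite lt_def ap hal.
have := hs (- be / al).
have -> : 2 * (- be / al) * be + (- be / al) ^+ 2 * al = - (be * be) / al by field.
move=> h; have : be * be / al <= 0 by lra.
rewrite pmulr_lle0 ?invr_gt0 // => hb; nra.
Qed.

Lemma K_diag (L : 'M[R]_(3, 2)) (A : 'M[R]_3) j : A^T = A ->
  (L^T *m (A *m L)) j j = dot (col j L) (A *m col j L).
Proof.
move=> hA; rewrite dot_mul hA dotE mxE; apply: eq_bigr => k _.
by rewrite !mxE mulrC; congr (_ * _); apply: eq_bigr => m _; rewrite !mxE.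
Qed.

Lemma col_AL (L : 'M[R]_(3, 2)) (A : 'M[R]_3) i j :
  (A *m col j L) i 0 = (A *m L) i j.
Proof. by rewrite !mxE; apply: eq_bigr => k _; rewrite !mxE. Qed.

Lemma K_psd (L : 'M[R]_(3, 2)) (A : 'M[R]_3) : psdmx A -> psdmx (L^T *m (A *m L)).
Proof.
move=> [hT hq]; split.
  by rewrite !trmx_mul hT trmxK mulmxA.
move=> v; rewrite quad_dot -mulmxA dot_mul trmxK -mulmxA.
by have := hq (L *m v); rewrite quad_dot.
Qed.

Lemma AL_pos (L : 'M[R]_(3, 2)) (A : 'M[R]_3) : psdmx A -> A *m L != 0 ->
  0 < (L^T *m (A *m L)) 0 0 + (L^T *m (A *m L)) 1 1.
Proof.
move=> hA hAL.
have [ks k0 k1 kb] := (psd2P _).1 (K_psd L A hA).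
rewrite lt_def; apply/andP; split; last exact: addr_ge0.
apply/negP => /eqP hk.
have e0 : (L^T *m (A *m L)) 0 0 = 0 by lra.
have e1 : (L^T *m (A *m L)) 1 1 = 0 by lra.
case/negP: hAL; apply/eqP/matrixP => i j.
have -> : (0 : 'M[R]_(3, 2)) i j = 0 by rewrite mxE.
rewrite -col_AL.
have Hj : j = 0 \/ j = 1.
  by case: j => [[|[|//]] Hj]; [left|right]; apply/val_inj.
have hA' := hA; case: hA' => hT _.
by case: Hj => ->; (rewrite (psd_null _ _ _ hA); first by rewrite mxE);
  rewrite -K_diag.
Qed.


Lemma rank_det (L : 'M[R]_(3, 2)) : \rank L = 2 -> 0 < \det (L^T *m L).
Proof.
move=> hr.
case/psd2P: (P_psd L) => hs ha hd hb.
rewrite det2E -hs.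
set a := (L^T *m L) 0 0 in ha hb *; set b := (L^T *m L) 0 1 in hb *;
set d := (L^T *m L) 1 1 in hd hb *.
rewrite lt_def; apply/andP; split; last by rewrite -expr2; lra.
apply/eqP => h0.
suff [x [hx hq]] : exists x : 'cV[R]_2, x != 0 /\
    (x^T *m (L^T *m L) *m x) 0 0 = 0.
  rewrite quad_dot -mulmxA dot_mul trmxK in hq.
  have hLx := dot_eq0 _ hq.
  have : x^T *m L^T == 0 by rewrite -trmx_mul hLx; apply/eqP/matrixP => i j; rewrite !mxE.
  rewrite mulmx_free_eq0; last by rewrite /row_free mxrank_tr hr.
  move=> /eqP hxT; case/negP: hx; apply/eqP.
  by rewrite -(trmxK x) hxT; apply/matrixP => i j; rewrite !mxE.
have [a0|an0] := eqVneq a 0.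
  have b0 : b = 0 by move: hb; rewrite a0 mul0r; nra.
  exists (v2 1 0); split.
    apply/eqP => /matrixP h; have := h 0 0; rewrite !mxE /= => /eqP.
    by rewrite oner_eq0.
  have [e1 e2] := v2E (R:=R) 1 0; rewrite quad2E e1 e2 -hs -/a -/b -/d a0 b0; ring.
exists (v2 b (- a)); split.
  apply/eqP => /matrixP h; have := h 1 0; rewrite !mxE /= => /eqP.
  by rewrite oppr_eq0 (negbTE an0).
have [e1 e2] := v2E (R:=R) b (- a); rewrite quad2E e1 e2 -hs -/a -/b -/d.
have -> : a * b ^+ 2 + (b + b) * b * - a + d * (- a) ^+ 2 = a * (a * d - b * b) by ring.
by rewrite h0 mulr0.
Qed.


Lemma addE (X Y : 'M[R]_2) i j : (X + Y) i j = X i j + Y i j.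
Proof. by rewrite mxE. Qed.

Lemma ent3 (X Y Z : 'M[R]_2) (t : R) i j :
  (X + t *: Y + (t * t) *: Z) i j = p2 (X i j) (Y i j) (Z i j) t.
Proof. rewrite !mxE /p2; ring. Qed.

Lemma partC (eps : R) (L : 'M[R]_(3, 2)) (A : 'M[R]_3) :
  0 <= eps -> psdmx A -> (eps = 0 -> \rank L = 2) ->
  let g := fun t : R => q_eps eps ((1%:M + t *: A) *m L) in
  derivable g 0 1 /\ 0 <= derive1 g 0 /\ (A *m L != 0 -> 0 < derive1 g 0).
Proof.
move=> he hA hr g.
set M0 := Mof eps L.
set K := L^T *m (A *m L).
set C := L^T *m (A *m L) + (A *m L)^T *m L.
set E := (A *m L)^T *m (A *m L).
have hAT : A^T = A by case: hA.
have hCK : C = K + K by rewrite /C /K trmx_mul hAT -mulmxA.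
pose mf i j := p2 (M0 i j) (C i j) (E i j).
have hent : forall t i j, Mof eps ((1%:M + t *: A) *m L) i j = mf i j t.
  by move=> t i j; rewrite Mof_line ent3.
pose T := fun t => mf 0 0 t + mf 1 1 t.
pose D := fun t => mf 0 0 t * mf 1 1 t + (-1) * (mf 0 1 t * mf 1 0 t).
pose h := fun t => T t + 2 * Num.sqrt (D t).
have hg : g = fun t => Num.sqrt (h t).
  by apply/funext => t; rewrite /g q_epsE /qf tr2E det2E !hent /h /T /D mulN1r.
have p20 : forall a b c, p2 a b c 0 = a by move=> a b c; rewrite /p2; ring.
have smT : sm T by apply: sm_add; apply: sm_p2.
have smD : sm D.
  apply: sm_add; first by apply: sm_mul; apply: sm_p2.
  by apply: sm_mul; [exact: sm_cst | apply: sm_mul; apply: sm_p2].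
have dT := sm_diff _ smT 0.
have dD := sm_diff _ smD 0.
have D0 : D 0 = \det M0 by rewrite /D /mf !p20 det2E mulN1r.
have hD0 : 0 < D 0.
  rewrite D0; move: he; rewrite le_eqVlt => /orP [/eqP e0 | ep].
    rewrite /M0 -e0 /Mof expr0n /= scale0r add0r; apply: rank_det; exact: hr.
  exact: detMof_pos.
have T0 : T 0 = \tr M0 by rewrite /T /mf !p20 tr2E.
have [ms m0 m1 mb] := (psd2P _).1 (Mof_psd eps L).
have [ks k0 k1 kb] := (psd2P _).1 (K_psd L A hA).
have sD0 : 0 < Num.sqrt (D 0) by rewrite sqrtr_gt0.
have hh0 : 0 < h 0.
  by rewrite /h T0 tr2E; apply: ltr_wpDl; [exact: addr_ge0 | apply: mulr_gt0].
have dsD : differentiable (fun t => Num.sqrt (D t)) 0 by apply: diff_sqrt.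
have d2 : differentiable (fun t : R => 2 * Num.sqrt (D t)) 0.
  by apply: differentiableM => //; exact: differentiable_cst.
have dh : differentiable h 0 by apply: differentiableD.
have hder : derivable g 0 1 by rewrite hg; apply: diff_derivable; apply: diff_sqrt.
split => //.
have Dg : derive1 g 0 = 'D_1 h 0 * (2 * Num.sqrt (h 0))^-1.
  by rewrite derive1E hg D_sqrt.
have Dh : 'D_1 h 0 = 'D_1 T 0 + 2 * ('D_1 D 0 * (2 * Num.sqrt (D 0))^-1).
  rewrite /h DD // DM //.
  by rewrite derive_cst mulr0 addr0 D_sqrt.
have DT : 'D_1 T 0 = C 0 0 + C 1 1 by rewrite /T DD ?p2_D //; apply: p2_diff.
have DDv : 'D_1 D 0 = M0 0 0 * C 1 1 + M0 1 1 * C 0 0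
    + (-1) * (M0 0 1 * C 1 0 + M0 1 0 * C 0 1).
  rewrite /D DD; first last.
  - by apply: differentiableM; [exact: differentiable_cst | apply: differentiableM; apply: p2_diff].
  - by apply: differentiableM; apply: p2_diff.
  rewrite DM; [|exact: p2_diff|exact: p2_diff].
  rewrite DM; [|exact: differentiable_cst| by apply: differentiableM; apply: p2_diff].
  rewrite DM; [|exact: p2_diff|exact: p2_diff].
  by rewrite /mf !p2_D !p20 derive_cst; ring.
rewrite Dg Dh DT DDv hCK !(addE K K).
set s := Num.sqrt (D 0) in sD0 *.
have sH : 0 < Num.sqrt (h 0) by rewrite sqrtr_gt0.
set H := Num.sqrt (h 0) in sH *.
rewrite -ms -ks.
set m00 := M0 0 0 in m0 mb *; set m01 := M0 0 1 in mb *; set m11 := M0 1 1 in m1 mb *.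
set k00 := K 0 0 in k0 kb *; set k01 := K 0 1 in kb *; set k11 := K 1 1 in k1 kb *.
have hc := cross_psd _ _ _ _ _ _ m0 m1 mb k0 k1 kb.
set X := s * (k00 + k00 + (k11 + k11)) + (m00 * (k11 + k11) + m11 * (k00 + k00)
   + -1 * (m01 * (k01 + k01) + m01 * (k01 + k01))).
have -> : (k00 + k00 + (k11 + k11) + 2 * ((m00 * (k11 + k11) + m11 * (k00 + k00)
   + -1 * (m01 * (k01 + k01) + m01 * (k01 + k01))) * (2 * s)^-1)) * (2 * H)^-1
   = X * (2 * s * H)^-1.
  by rewrite /X; field; rewrite ?mulf_neq0 ?gt_eqF.
have pos : 0 < (2 * s * H)^-1 by rewrite invr_gt0; apply: mulr_gt0 => //; apply: mulr_gt0.
have hX : 2 * s * (k00 + k11) <= X by rewrite /X; lra.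
split.
  apply: mulr_ge0; last exact: ltW.
  apply: le_trans hX; apply: mulr_ge0; [apply: mulr_ge0 => //; exact: ltW | lra].
move=> hAL; have hk := AL_pos L A hA hAL.
apply: mulr_gt0 => //.
apply: lt_le_trans hX; apply: mulr_gt0 => //; apply: mulr_gt0 => //.
Qed.

End PartC.

Theorem lemmaA4 (R : realType) :
  (* (a) *)
  (forall (eps : R), 0 <= eps -> forall L : 'M[R]_(3, 2),
     q_eps eps L =
     Num.sqrt (\tr (eps ^+ 2 *: 1%:M + L^T *m L)
               + 2 * Num.sqrt (\det (eps ^+ 2 *: 1%:M + L^T *m L)))) /\
  (forall (eps : R), 0 < eps -> smooth (q_eps eps)) /\
  (* (b) *)
  (forall (eps : R), 0 <= eps -> convex_fun (q_eps eps)) /\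
  (* (c) *)
  (forall (eps : R) (L : 'M[R]_(3, 2)) (A : 'M[R]_3),
     0 <= eps -> psdmx A -> (eps = 0 -> \rank L = 2) ->
     let g := fun t : R => q_eps eps ((1%:M + t *: A) *m L) in
     derivable g 0 1 /\ 0 <= derive1 g 0 /\ (A *m L != 0 -> 0 < derive1 g 0)).
Proof.
split; first by move=> eps _ L; rewrite q_epsE.
split; first by move=> eps; exact: smooth_q.
split; first by move=> eps; exact: convex_all.
by move=> eps L A he hA hr; exact: partC.
Qed.
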